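(* Let UBEV-S (described in the context) be run for $K$ episodes on a finite-horizon episodic stationary MDP with $S$ states, $A$ actions and horizon $H$. Then $$\sum_{k=1}^K\sum_{t=1}^H\sum_{(s,a)\notin L_k}w_{tk}(s,a)=\tilde O(SAH).$$
   Context: Setting: finite-horizon episodic MDP with finite state set ($S$ states), finite action set ($A$ actions), horizon $H$, stationary transitions and mean rewards in $[0,1]$. UBEV-S is an algorithm (with failure tolerance $\delta\in(0,1]$) that in each episode $k$ plays a policy $\pi_k$ mapping (state, timestep) to actions. $w_{tk}(s,a)$ denotes the probability, in episode $k$ under $\pi_k$, of being in state $s$ at step $t$ and taking action $a$; $w_k(s,a)=\sum_{t\in[H]}w_{tk}(s,a)$. The set $L_k$ is $L_k=\{(s,a)\in\mathcal S\times\mathcal A:\ \frac14\sum_{j\le k}w_j(s,a)\ge H\ln\frac{9SA}{\delta}\}$. $\tilde O(\cdot)$ hides constants and factors polylogarithmic in quantities polynomial in $S,A,T,K,H,1/\delta$. *)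

(* Defs.v *)
From HB Require Import structures.
From mathcomp Require Import all_boot all_order all_algebra.
From mathcomp Require Import reals exp.
Set Implicit Arguments. Unset Strict Implicit. Unset Printing Implicit Defensive.
Import Order.TTheory GRing.Theory Num.Theory.
Local Open Scope ring_scope.

Section MDP.
Variables (R : realType) (St Ac : finType).

Definition is_mdp (P : St -> Ac -> St -> R) (p0 : St -> R) (r : St -> Ac -> R) :=
  [/\ (forall s a s', 0 <= P s a s'),
      (forall s a, \sum_(s' : St) P s a s' = 1),
      (forall s, 0 <= p0 s),
      \sum_(s : St) p0 s = 1
    & (forall s a, 0 <= r s a <= 1)].

(* A (deterministic, non-stationary) policy: [pi t s] is the action taken in
   state [s] at step [t] (steps are 0-indexed: t = 0, ..., H-1). *)
Fixpoint state_dist (P : St -> Ac -> St -> R) (p0 : St -> R)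
    (pi : nat -> St -> Ac) (t : nat) : St -> R :=
  match t with
  | 0 => p0
  | t'.+1 => fun s' => \sum_(s : St) state_dist P p0 pi t' s * P s (pi t' s) s'
  end.

Definition occ P p0 (pi : nat -> St -> Ac) (t : nat) (sa : St * Ac) : R :=
  state_dist P p0 pi t sa.1 * (pi t sa.1 == sa.2)%:R.

Definition occ_tot P p0 (H : nat) (pi : nat -> St -> Ac) (sa : St * Ac) : R :=
  \sum_(t < H) occ P p0 pi t sa.

(* (s,a) \in L_k  (episodes 0-indexed, j <= k inclusive). *)
Definition inL P p0 (H : nat) (delta : R) (pis : nat -> nat -> St -> Ac)
    (k : nat) (sa : St * Ac) : bool :=
  (H%:R * ln (9 * #|St|%:R * #|Ac|%:R / delta)
     <= 4^-1 * \sum_(j < k.+1) occ_tot P p0 H (pis j) sa).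

End MDP.

(* Main.v *)
Require Import Defs.
From HB Require Import structures.
From mathcomp Require Import all_boot all_order all_algebra.
From mathcomp Require Import reals exp.
From mathcomp Require Import ring lra.
Import Order.TTheory GRing.Theory Num.Theory.
Local Open Scope ring_scope.

Lemma thresh_sum (R : realType) (w : nat -> R) (T : R) (K : nat) :
  (forall j, 0 <= w j) -> 0 <= T ->
  \sum_(k < K) (if ~~ (T <= 4^-1 * \sum_(j < k.+1) w j) then w k else 0)
  <= 4 * T.
Proof.
move=> w0 T0.
suff : \sum_(k < K) (if ~~ (T <= 4^-1 * \sum_(j < k.+1) w j) then w k else 0)
  <= \sum_(k < K) w k /\
  \sum_(k < K) (if ~~ (T <= 4^-1 * \sum_(j < k.+1) w j) then w k else 0)
  <= 4 * T by case.
elim: K => [|K [IH1 IH2]]; first by rewrite !big_ord0; split => //; lra.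
rewrite !big_ord_recr /=.
case: ifP => [/negP /negP|/negbFE] h.
  rewrite -ltNge in h.
  set S := (\sum_(i < K) w i + w K) in h *.
  have e : S = 4 * (4^-1 * S).
    by rewrite mulrA divff ?mul1r // pnatr_eq0.
  have h2 : S < 4 * T.
    move: e h; set X := 4^-1 * S; lra.
  rewrite /S in h2 *; split; lra.
have := w0 K; split; lra.
Qed.

Lemma sd_ge0 (R : realType) (St Ac : finType) P p0 r pi t s :
  @is_mdp R St Ac P p0 r -> 0 <= state_dist P p0 pi t s.
Proof.
case=> hP _ hp0 _ _; elim: t s => [|t IH] s /=; first exact: hp0.
by apply: sumr_ge0 => i _; apply: mulr_ge0.
Qed.
Theorem lemma3 (R : realType) :
  exists (C : R) (c : nat),
  forall (St Ac : finType) (H K : nat) (delta : R)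
         (P : St -> Ac -> St -> R) (p0 : St -> R) (r : St -> Ac -> R)
         (pis : nat -> nat -> St -> Ac),
    (0 < #|St|)%N -> (0 < #|Ac|)%N -> (0 < H)%N -> (0 < K)%N ->
    0 < delta <= 1 ->
    is_mdp P p0 r ->
    \sum_(k < K) \sum_(t < H) \sum_(sa : St * Ac | ~~ inL P p0 H delta pis k sa)
        occ P p0 (pis k) t sa
    <= C * (#|St|%:R * #|Ac|%:R * H%:R)
         * (1 + ln (#|St|%:R * #|Ac|%:R * H%:R * K%:R / delta)) ^+ c.
Proof.
exists 36, 1%N.
move=> St Ac H K delta P p0 r pis hS hA hH hK /andP[d0 d1] hm.
set S := #|St|%:R; set A := #|Ac|%:R.
have S1 : (1 : R) <= S by rewrite /S ler1n.
have A1 : (1 : R) <= A by rewrite /A ler1n.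
have H1 : (1 : R) <= H%:R by rewrite ler1n.
have K1 : (1 : R) <= K%:R by rewrite ler1n.
have occ0 : forall pi t sa, 0 <= occ P p0 pi t sa.
  by move=> pi t sa; apply: mulr_ge0; [exact: sd_ge0 hm|].
have tot0 : forall pi sa, 0 <= occ_tot P p0 H pi sa.
  by move=> pi sa; apply: sumr_ge0 => t _.
set l := ln (9 * S * A / delta).
set L := ln (S * A * H%:R * K%:R / delta).
have l0 : 0 <= l.
  apply: ln_ge0; rewrite ler_pdivlMr // mul1r.
  apply: le_trans d1 _; rewrite -[1]mul1r; apply: ler_pM => //.
  rewrite -[1]mul1r; apply: ler_pM => //; lra.
have T0 : 0 <= H%:R * l by apply: mulr_ge0 => //; lra.
have step1 : \sum_(k < K) \sum_(t < H) \sum_(sa : St * Ac | ~~ inL P p0 H delta pis k sa)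
        occ P p0 (pis k) t sa
   = \sum_(sa : St * Ac) \sum_(k < K) (if ~~ inL P p0 H delta pis k sa
        then occ_tot P p0 H (pis k) sa else 0).
  rewrite [RHS]exchange_big /=; apply: eq_bigr => k _.
  rewrite exchange_big /= big_mkcond /=; apply: eq_bigr => sa _.
  by case: ifP.
rewrite step1.
have step2 : \sum_(sa : St * Ac) \sum_(k < K) (if ~~ inL P p0 H delta pis k sa
        then occ_tot P p0 H (pis k) sa else 0) <= \sum_(sa : St * Ac) (4 * (H%:R * l)).
  apply: ler_sum => sa _.
  exact: (@thresh_sum R (fun j => occ_tot P p0 H (pis j) sa) _ K (fun j => tot0 _ _) T0).
apply: le_trans step2 _.
rewrite sumr_const card_prod -/S -/A.
have lL : l <= 9 * (1 + L).
  have -> : l = ln 9 + ln (S * A / delta).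
    rewrite /l -lnM ?posrE //; last by apply: divr_gt0 => //; apply: mulr_gt0; lra.
    by rewrite !mulrA.
  have h9 : ln (9 : R) < 9 by apply: ln_sublinear.
  have SAd : 0 < S * A / delta by apply: divr_gt0 => //; apply: mulr_gt0; lra.
  have SA1 : 1 <= S * A by rewrite -[1]mul1r; apply: ler_pM => //; lra.
  have HK1 : 1 <= H%:R * K%:R :> R by rewrite -[1]mul1r; apply: ler_pM => //; lra.
  have le1 : S * A / delta <= S * A * H%:R * K%:R / delta.
    apply: ler_wpM2r; first by rewrite invr_ge0; lra.
    rewrite -mulrA -[X in X <= _]mulr1; apply: ler_wpM2l; lra.
  have Lpos : 0 < S * A * H%:R * K%:R / delta by apply: lt_le_trans le1.
  have hL : ln (S * A / delta) <= L.
    by rewrite /L ler_ln ?posrE.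
  have L0 : 0 <= L.
    apply: ln_ge0; apply: le_trans le1; rewrite ler_pdivlMr // mul1r; lra.
  lra.
rewrite -[X in X <= _]mulr_natr natrM -/S -/A expr1.
have N0 : 0 <= S * A * H%:R by apply: mulr_ge0; [apply: mulr_ge0|]; lra.
have -> : 4 * (H%:R * l) * (S * A) = (S * A * H%:R) * (4 * l) by ring.
have -> : 36 * (S * A * H%:R) * (1 + L) = (S * A * H%:R) * (36 * (1 + L)) by ring.
apply: ler_wpM2l => //; lra.


Qed.
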